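(* Let $K\ge1$, $\alpha\in(0,1]$ and $\gamma\in(0,1]$. For $i\in[K]$ let $F_i$ be an arbitrary nonnegative random variable and $E_i$ a nonnegative random variable such that $\mathbb E[E_i]\le1$ whenever the $i$-th null hypothesis is true; the $F_i$ and $E_i$ may be arbitrarily dependent. For each $i$, draw $T_i$ such that conditionally on all $F_j,E_j$, $T_i\sim\mathrm{Bern}((1-\gamma F_i^{-1})_+)$, and set $\tilde E_i := (1-T_i)F_i + T_i(1-\gamma)E_i$. Let $\mathcal R^{\mathrm{acteBH}}$ be the output of the e-BH procedure at level $\alpha$ applied to $(\tilde E_1,\dots,\tilde E_K)$. Then $\mathrm{FDR}(\mathcal R^{\mathrm{acteBH}})\le\alpha$.
   Context: e-BH at level $\alpha$: with $E_{[i]}$ the $i$-th largest input e-value, $k^{\mathrm{eBH}}=\max\{i\in[K]: E_{[i]}\ge K/(\alpha i)\}$ and the rejection set is $\{i: E_i\ge K/(\alpha k^{\mathrm{eBH}})\}$ (empty if no such $i$). $\mathrm{FDR}(\mathcal R)=\mathbb E\big[|\mathcal N\cap\mathcal R|/(|\mathcal R|\vee1)\big]$ where $\mathcal N$ is the set of true nulls. $x_+=\max(x,0)$; $(1-\gamma F^{-1})_+=0$ when $F=0$. *)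

(* Defs.v *)
From HB Require Import structures.
From mathcomp Require Import all_boot all_order all_algebra.
From mathcomp Require Import all_classical all_reals all_analysis.
Set Implicit Arguments. Unset Strict Implicit. Unset Printing Implicit Defensive.
Import Order.TTheory GRing.Theory Num.Theory.
Local Open Scope classical_set_scope.
Local Open Scope ring_scope.

Section Defs.
Variable R : realType.

(* E_[i]: the i-th largest of the e-values (1-based), via sorting decreasingly *)
Definition ord_stat (K : nat) (e : 'I_K -> R) (i : nat) : R :=
  nth 0 (sort (fun x y : R => y <= x) [seq e j | j <- enum 'I_K]) i.-1.

(* k^eBH = max{ i in [K] : E_[i] >= K/(alpha i) }, 0 if no such i *)
Definition ebh_k (K : nat) (alpha : R) (e : 'I_K -> R) : nat :=
  \max_(i < K.+1 | (0 < i)%N && (K%:R / (alpha * i%:R) <= ord_stat e i)) (i : nat).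

Definition ebh (K : nat) (alpha : R) (e : 'I_K -> R) : {set 'I_K} :=
  [set j | (0 < ebh_k alpha e)%N && (K%:R / (alpha * (ebh_k alpha e)%:R) <= e j)].

Definition fdp (K : nat) (N Rej : {set 'I_K}) : R :=
  #|N :&: Rej|%:R / (maxn #|Rej| 1)%:R.

(* (1 - gamma F^{-1})_+, with the convention that it is 0 when F = 0 *)
Definition bern_prob (gamma f : R) : R :=
  if f == 0 then 0 else Num.max (1 - gamma / f) 0.

End Defs.

Definition gen_FE (d : measure_display) (T : measurableType d) (R : realType)
    (K : nat) (F E : 'I_K -> T -> R) : set (set T) :=
  <<s [set A | exists (j : 'I_K) (B : set R), measurable B /\
                 (A = F j @^-1` B \/ A = E j @^-1` B)] >>.
Arguments fdp {R K}.

(* Main.v *)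
Require Import Defs.
From HB Require Import structures.
From mathcomp Require Import all_boot all_order all_algebra.
From mathcomp Require Import all_classical all_reals all_analysis.
From mathcomp Require Import measurable_realfun.
From mathcomp Require Import ring lra.
Import Order.TTheory GRing.Theory Num.Theory.
Import HBNNSimple.
Local Open Scope classical_set_scope.
Local Open Scope ring_scope.

Lemma card_count (K : nat) (p : pred 'I_K) : #|[set j | p j]%SET| = count p (enum 'I_K).
Proof.
transitivity #|p|; first by apply: eq_card => j; rewrite inE.
rewrite cardE -size_filter; congr size.
rewrite /enum_mem -filter_predI; apply: eq_filter => x /=; by rewrite andbT.
Qed.

Lemma ebh_k_spec (R : realType) (K : nat) (alpha : R) (e : 'I_K -> R) :
  (0 < ebh_k alpha e)%N ->
  (ebh_k alpha e <= K)%N /\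
      K%:R / (alpha * (ebh_k alpha e)%:R) <= ord_stat e (ebh_k alpha e).
Proof.
pose P := [pred i : 'I_K.+1 | (0 < i)%N && (K%:R / (alpha * i%:R) <= ord_stat e i)].
have -> : ebh_k alpha e = \max_(i in P) i by [].
have [c0|cpos] := posnP #|P|.
  by rewrite big_pred0 // => i; rewrite (card0_eq c0).
have [i0 Pi0 ->] := eq_bigmax_cond (fun i : 'I_K.+1 => (i : nat)) cpos.
move: Pi0; rewrite inE => /andP[i0pos thr] _.
by split => //; rewrite -ltnS.
Qed.

Lemma ebh_card (R : realType) (K : nat) (alpha : R) (e : 'I_K -> R) :
  (0 < ebh_k alpha e)%N -> (ebh_k alpha e <= #|ebh alpha e|)%N.
Proof.
move=> kpos; have [i0K thr] := @ebh_k_spec _ _ _ _ kpos : _ /\ _.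
move: kpos thr i0K; rewrite /ebh; set i0 := ebh_k alpha e => i0pos thr i0K.
under eq_finset do rewrite i0pos /=.
rewrite (@card_count K (fun j => K%:R / (alpha * i0%:R) <= e j)).
rewrite -(count_map e (fun y => K%:R / (alpha * i0%:R) <= y)).
rewrite -(count_sort (fun x y : R => y <= x)).
set s := sort _ _.
have ss : size s = K by rewrite size_sort size_map size_enum_ord.
have srt : sorted (fun x y : R => y <= x) s by apply: sort_sorted => x y; exact: le_total.
rewrite -(cat_take_drop i0 s) count_cat.
apply: leq_trans (leq_addr _ _).
have : all (fun y => K%:R / (alpha * i0%:R) <= y) (take i0 s).
  apply/(all_nthP 0) => j; rewrite size_takel ?ss // => ji0.
  rewrite nth_take //; apply: le_trans thr _.
  rewrite /ord_stat -/s.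
  have tr : transitive (fun x y : R => y <= x) by move=> ? ? ? h1 h2; exact: le_trans h2 h1.
  apply: (sorted_leq_nth tr (fun x => lexx x) 0 srt).
  - by rewrite inE ss (leq_trans ji0).
  - by rewrite inE ss prednK // (leq_trans _ i0K) // leq_pred.
  - by rewrite -ltnS prednK.
rewrite all_count => /eqP ->; by rewrite size_takel ?ss.
Qed.

Lemma fdp_bound (R : realType) (K : nat) (alpha : R) (e : 'I_K -> R) (N : {set 'I_K}) :
  0 < alpha -> (0 < K)%N -> (forall j, 0 <= e j) ->
  fdp N (ebh alpha e) <= alpha / K%:R * \sum_(j in N) e j.
Proof.
move=> a0 K0 e0.
have rhs0 : 0 <= alpha / K%:R * \sum_(j in N) e j.
  by apply: mulr_ge0; [apply: divr_ge0; [exact: ltW|exact: ler0n] | exact: sumr_ge0].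
have [k0|kpos] := posnP (ebh_k alpha e).
  have -> : ebh alpha e = finset.set0 by apply/setP => j; rewrite !inE k0.
  by rewrite /fdp finset.setI0 cards0 mul0r.
have hk := @ebh_card _ _ _ _ kpos.
set k := ebh_k alpha e in kpos hk.
have memR j : j \in ebh alpha e -> K%:R / (alpha * k%:R) <= e j.
  by rewrite inE => /andP[].
have kR : 0 < k%:R :> R by rewrite ltr0n.
have KR : 0 < K%:R :> R by rewrite ltr0n.
rewrite /fdp.
apply: (@le_trans _ _ (#|N :&: ebh alpha e|%:R / k%:R)).
  apply: ler_wpM2l; first exact: ler0n.
  have km : (k <= maxn #|ebh alpha e| 1)%N by exact: leq_trans hk (leq_maxl _ _).
  by rewrite lef_pV2 ?posrE ?ltr0n ?(leq_trans kpos) // ler_nat.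
rewrite [\sum_(j in N) e j](big_setID (ebh alpha e)) /= mulrDr.
apply: ler_wpDr.
  by apply: mulr_ge0; [apply: divr_ge0; [exact: ltW|exact: ler0n] | exact: sumr_ge0].
rewrite mulr_sumr.
have -> : #|N :&: ebh alpha e|%:R / k%:R = \sum_(i in N :&: ebh alpha e) k%:R^-1 :> R.
  by rewrite sumr_const mulr_natl.
apply: ler_sum => j; rewrite finset.in_setI => /andP[_ /memR h].
have h2 := ler_wpM2l (_ : 0 <= alpha / K%:R) h.
apply: le_trans (h2 _); last by apply: divr_ge0; [exact: ltW|exact: ler0n].
suff -> : alpha / K%:R * (K%:R / (alpha * k%:R)) = k%:R^-1 :> R by []. field.
by rewrite !pnatr_eq0 -!lt0n K0 kpos (gt_eqF a0).
Qed.

Lemma step_bound (R : realType) (y delta : R) (M : nat) :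
  0 <= y -> 0 < delta ->
  (Num.min y (M%:R * delta) <= \sum_(k < M) delta * ((k%:R * delta <= y)%R)%:R <= y + delta)%R.
Proof.
move=> y0 d0.
have full m : m%:R * delta <= y -> \sum_(k < m) delta * ((k%:R * delta <= y)%R)%:R = m%:R * delta.
  move=> my; transitivity (\sum_(k < m) delta); last first.
    by rewrite sumr_const card_ord mulr_natl.
  apply: eq_bigr => k _; rewrite (_ : (k%:R * delta <= y)%R = true) ?mulr1 //.
  apply: le_trans my; rewrite ler_pM2r // ler_nat; exact: ltnW.
elim: M => [|M IH].
  rewrite big_ord0 mul0r ge_min lexx orbT /=; apply: addr_ge0 => //; exact: ltW.
rewrite big_ord_recr /=.
have [My|My] := leP (M%:R * delta) y.
  rewrite full // mulr1 -natr1 mulrDl mul1r.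
  apply/andP; split; first by rewrite ge_min lexx orbT.
  by rewrite lerD2r.
rewrite mulr0 addr0; case/andP: IH => IH1 IH2; rewrite IH2 andbT.
apply: le_trans IH1; rewrite le_min !ge_min lexx /= (ltW My) //.
Qed.

Section Bern.
Variable R : realType.
Variable gamma : R.
Hypothesis g0 : 0 < gamma.

Lemma bern_ge0 y : 0 <= bern_prob gamma y.
Proof. by rewrite /bern_prob; case: ifP => // _; rewrite le_max lexx orbT. Qed.

Lemma bern_le1 y : 0 <= y -> bern_prob gamma y <= 1.
Proof.
move=> y0; rewrite /bern_prob; case: ifP => // /negbT yn0.
have yp : 0 < y by rewrite lt_neqAle eq_sym yn0.
rewrite ge_max ler01 andbT lerBlDr lerDl; apply: divr_ge0; exact: ltW.
Qed.

Lemma bern_F y : 0 <= y -> (1 - bern_prob gamma y) * y <= gamma.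
Proof.
move=> y0; rewrite /bern_prob; case: ifP => [/eqP ->|/negbT yn0]; first by rewrite mulr0 ltW.
have yp : 0 < y by rewrite lt_neqAle eq_sym yn0.
have [h|h] := leP (1 - gamma / y) 0.
  rewrite subr0 mul1r.
  by move: h; rewrite subr_le0 ler_pdivlMr // mul1r.
rewrite opprB addrC subrK mulrVK ?unitfE ?gt_eqF //.
Qed.

Lemma bern_mono : {homo (fun y => bern_prob gamma (Num.max y 0)) : a b / a <= b}.
Proof.
move=> a b ab /=.
have a0 : 0 <= Num.max a 0 by rewrite le_max lexx orbT.
have ab' : Num.max a 0 <= Num.max b 0 by rewrite ge_max !le_max ab lexx /= !orbT.
rewrite {1}/bern_prob; case: ifP => [_|/negbT an0]; first exact: bern_ge0.
have ap : 0 < Num.max a 0 by rewrite lt_neqAle eq_sym an0.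
have bp : 0 < Num.max b 0 by apply: lt_le_trans ab'.
rewrite /bern_prob gt_eqF //.
rewrite ge_max; apply/andP; split; last by rewrite le_max lexx orbT.
rewrite le_max; apply/orP; left.
rewrite lerD2l lerN2 ler_pM2l //; rewrite lef_pV2 ?posrE //.
Qed.

End Bern.

Lemma memb (T : Type) (b : T -> bool) x : (x \in [set y | b y]) = b x.
Proof. by apply/idP/idP; rewrite in_setE. Qed.

Lemma memitv (R : realType) (c y : R) : (y \in `[c, +oo[%classic) = (c <= y)%R.
Proof. by apply/idP/idP; rewrite in_setE /= in_itv /= andbT. Qed.

Section Main.
Local Open Scope ereal_scope.
Variables (d : measure_display) (T : measurableType d) (R : realType).
Variables (P : probability T R) (K : nat) (gamma : R).
Variables (F E : 'I_K -> T -> R) (Tb : 'I_K -> T -> bool).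
Hypothesis g0 : (0 < gamma)%R.
Hypothesis g1 : (gamma <= 1)%R.
Hypothesis mF : forall i, measurable_fun setT (F i).
Hypothesis mE : forall i, measurable_fun setT (E i).
Hypothesis F0 : forall i x, (0 <= F i x)%R.
Hypothesis E0 : forall i x, (0 <= E i x)%R.
Hypothesis mTb : forall i, measurable [set x | Tb i x].
Hypothesis hcond : forall i A, gen_FE F E A ->
     P (A `&` [set x | Tb i x]) = (\int[P]_(x in A) (bern_prob gamma (F i x))%:E).

Lemma gen_meas A : gen_FE F E A -> measurable A.
Proof.
apply: smallest_sub; first exact: sigma_algebra_measurable.
move=> _ [j [B [mB [->|->]]]]; rewrite -[X in measurable X]setTI.
- exact: mF.
- exact: mE.
Qed.

Lemma gen_ge i c : gen_FE F E (F i @^-1` `[c, +oo[%classic).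
Proof.
apply: sub_sigma_algebra; exists i, `[c, +oo[%classic; split; last by left.
exact: measurable_itv.
Qed.

Definition tb i x : R := ((Tb i x)%:R)%R.
Definition pp i x : R := bern_prob gamma (F i x).

Lemma mtb i : measurable_fun setT (tb i).
Proof.
have -> : tb i = \1_[set x | Tb i x].
  apply/funext => x; rewrite indicE /tb.
  by have -> : (x \in [set x | Tb i x]) = Tb i x by apply/idP/idP; rewrite in_setE.
exact: measurable_indic.
Qed.

Lemma mpp i : measurable_fun setT (pp i).
Proof.
have -> : pp i = (fun y => bern_prob gamma (Num.max y 0)%R) \o F i.
  by apply/funext => x; rewrite /pp /= max_l.
apply: measurableT_comp (mF i).
exact: (nondecreasing_measurable measurableT (bern_mono _ _ g0)).
Qed.

Lemma cond1 i A : gen_FE F E A ->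
  \int[P]_x ((1 - tb i x) * \1_A x)%:E = \int[P]_x ((1 - pp i x) * \1_A x)%:E.
Proof.
move=> gA; have mA := gen_meas _ gA.
have mT : measurable [set x | Tb i x] := mTb i.
have L : \int[P]_x ((1 - tb i x) * \1_A x)%:E = P (A `\` [set x | Tb i x]).
  rewrite -(setIT (A `\` _)) -integral_indic //; last exact: measurableD.
  apply: eq_integral => x _; rewrite !indicE in_setD /tb memb.
  by case: (Tb i x); case: (x \in A); rewrite /= ?subrr ?mul0r ?subr0 ?mul1r.
have Rr : \int[P]_x ((1 - pp i x) * \1_A x)%:E = \int[P]_(x in A) (1 - pp i x)%:E.
  rewrite [RHS]integral_mkcond; apply: eq_integral => x _; rewrite patchE indicE.
  by case: (x \in A); rewrite /= ?mulr1 ?mulr0.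
have pA0 x : (0 <= pp i x)%R by exact: bern_ge0.
have pA1 x : (pp i x <= 1)%R by exact: bern_le1.
have mpA : measurable_fun A (EFin \o pp i).
  by apply/measurable_EFinP; apply: measurable_funS (mpp i).
have m1pA : measurable_fun A (EFin \o (fun x => 1 - pp i x)%R).
  apply/measurable_EFinP; apply: measurable_funS (_ : measurable_fun setT _) => //.
  exact: measurable_funB (measurable_cst _) (mpp i).
have D : P A = \int[P]_(x in A) (1 - pp i x)%:E + \int[P]_(x in A) (pp i x)%:E.
  rewrite -ge0_integralD //; last by move=> x _; rewrite lee_fin.
    transitivity (\int[P]_(x in A) (cst 1%E x)); first by rewrite integral_cst // mul1e.
    by apply: eq_integral => x _; rewrite /= -EFinD subrK.
  by move=> x _; rewrite lee_fin subr_ge0.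
have S : P A = P (A `\` [set x | Tb i x]) + \int[P]_(x in A) (pp i x)%:E.
  by rewrite -(hcond i A gA); exact: measureDI.
rewrite D in S.
have fin : \int[P]_(x in A) (pp i x)%:E \is a fin_num.
  by rewrite -(hcond i A gA); apply: fin_num_measure; exact: measurableI.
rewrite L Rr; move/(congr1 (fun z => z - \int[P]_(x in A) (pp i x)%:E)): S.
by rewrite !addeK.
Qed.

Lemma lin_sum (g : T -> R) M (delta : R) (A : 'I_M -> set T) :
  measurable_fun setT g -> (forall x, 0 <= g x)%R -> (0 <= delta)%R ->
  (forall k, measurable (A k)) ->
  \int[P]_x (g x * \sum_(k < M) delta * \1_(A k) x)%:E =
  \sum_(k < M) (delta%:E * \int[P]_x (g x * \1_(A k) x)%:E).
Proof.
move=> mg gge d0 mA.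
have ind0 k x : (0 <= \1_(A k) x :> R)%R by rewrite indicE ler0n.
transitivity (\int[P]_x (\sum_(k < M) (delta * (g x * \1_(A k) x))%:E)).
  apply: eq_integral => x _; rewrite sumEFin mulr_sumr; congr EFin.
  by apply: eq_bigr => k _; rewrite mulrCA.
rewrite ge0_integral_sum //.
- apply: eq_bigr => k _; rewrite -ge0_integralZl_EFin //.
  + by move=> x _; rewrite lee_fin mulr_ge0.
  + apply/measurable_EFinP; apply: measurable_funM mg _.
    exact: measurable_indic.
- move=> k; apply/measurable_EFinP; apply: measurable_funM (measurable_cst _) _.
  apply: measurable_funM mg _; exact: measurable_indic.
- by move=> k x _; rewrite lee_fin !mulr_ge0.
Qed.

Lemma tb01 i x : tb i x = 0%R \/ tb i x = 1%R.
Proof. by rewrite /tb; case: (Tb i x); [right|left]. Qed.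

Lemma tb_ge0 i x : (0 <= 1 - tb i x)%R.
Proof. by case: (tb01 i x) => ->; rewrite ?subr0 ?subrr. Qed.

Lemma fin_bound (h : {nnsfun T >-> R}) : exists c : R, forall x, (h x <= c)%R.
Proof.
have /finite_fsetP [X eX] := fimfunP h.
exists (\big[Num.max/0%R]_(y <- (finmap.enum_fset X)) y)%R => x.
have hX : h x \in (finmap.enum_fset X).
  have : range h (h x) by exists x.
  by rewrite eX.
exact: (le_bigmax_seq 0%R (h x) xpredT id hX).
Qed.

Lemma key i : \int[P]_x ((1 - tb i x) * F i x)%:E <= gamma%:E.
Proof.
rewrite ge0_integralTE; last by move=> x; rewrite lee_fin mulr_ge0 // tb_ge0.
apply: ge_ereal_sup => _ [h hle <-].
rewrite -integralT_nnsfun.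
have [c hc] := fin_bound h.
apply/lee_addgt0Pr => delta d0.
set c' := Num.max c 0%R.
have c'0 : (0 <= c')%R by rewrite le_max lexx orbT.
pose M := Num.bound (c' / delta).
have hM : (c' <= M%:R * delta)%R.
  rewrite -ler_pdivrMr //; apply: ltW; exact: archi_boundP (divr_ge0 c'0 (ltW d0)).
pose A (k : 'I_M) := F i @^-1` `[(k%:R * delta)%R, +oo[%classic.
have mA k : measurable (A k).
  by rewrite -[X in measurable X]setTI; apply: mF => //; exact: measurable_itv.
have Aind x k : \1_(A k) x = (((k%:R * delta)%R <= F i x)%R)%:R :> R.
  by rewrite indicE /A -(memitv _ (k%:R * delta)%R (F i x)).
pose sf x := (\sum_(k < M) delta * \1_(A k) x)%R.
have sb x : (Num.min (F i x) (M%:R * delta) <= sf x <= F i x + delta)%R.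
  rewrite /sf; under eq_bigr do rewrite Aind; exact: step_bound.
have sf0 x : (0 <= sf x)%R.
  rewrite /sf; apply: sumr_ge0 => k _; apply: mulr_ge0; first exact: ltW d0.
  by rewrite indicE; exact: ler0n.
have msf : measurable_fun setT sf.
  rewrite /sf; apply: measurable_sum => k.
  apply: measurable_funM (measurable_cst _) _; exact: measurable_indic.
have m1tb : measurable_fun setT (fun x => 1 - tb i x)%R.
  exact: measurable_funB (measurable_cst _) (mtb i).
have m1pp : measurable_fun setT (fun x => 1 - pp i x)%R.
  exact: measurable_funB (measurable_cst _) (mpp i).
apply: (@le_trans _ _ (\int[P]_x ((1 - tb i x) * sf x)%:E)).
  apply: ge0_le_integral => //.
  - by move=> x _; rewrite lee_fin.
  - by apply/measurable_EFinP; exact: measurable_funTS.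
  - by apply/measurable_EFinP; exact: measurable_funM.
  move=> x _; have := hle x; rewrite /= !lee_fin.
  case: (tb01 i x) => ->; rewrite ?subrr ?mul0r ?subr0 ?mul1r // => hF.
  case/andP: (sb x) => + _; apply: le_trans; rewrite le_min hF /=.
  by apply: le_trans hM; apply: le_trans (hc x) _; rewrite le_max lexx.
rewrite /sf (lin_sum _ _ _ _ m1tb (tb_ge0 i) (ltW d0) mA).
under eq_bigr => k _ do rewrite (cond1 i (A k) (gen_ge i _)).
have pp1 x : (0 <= 1 - pp i x)%R by rewrite subr_ge0; apply: bern_le1.
rewrite -(lin_sum _ _ _ _ m1pp pp1 (ltW d0) mA).
apply: (@le_trans _ _ (\int[P]_x (cst (gamma + delta)%:E x))).
  apply: ge0_le_integral => //.
  - by move=> x _; rewrite lee_fin; apply: mulr_ge0; [exact: pp1|exact: sf0].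
  - apply/measurable_EFinP; apply: measurable_funM m1pp _.
    by apply: measurable_sum => k; apply: measurable_funM (measurable_cst _) _; exact: measurable_indic.
  move=> x _; rewrite /= lee_fin -/(sf x).
  have p0 : (0 <= pp i x)%R by exact: bern_ge0.
  have p1 : (pp i x <= 1)%R by exact: bern_le1.
  have := bern_F _ _ g0 _ (F0 i x); rewrite -/(pp i x) => hF.
  case/andP: (sb x) => _ hs.
  apply: (@le_trans _ _ ((1 - pp i x) * (F i x + delta))%R).
    by apply: ler_wpM2l; rewrite ?subr_ge0.
  rewrite mulrDr lerD // ler_piMl ?(ltW d0) // lerBlDl lerDr //.
by rewrite integral_cst // [X in (_ * X)%E]probability_setT mule1 EFinD.
Qed.

Lemma Et_le1 j : \int[P]_x (E j x)%:E <= 1 ->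
  \int[P]_x ((1 - tb j x) * F j x + tb j x * (1 - gamma) * E j x)%:E <= 1.
Proof.
move=> hE.
have g1' : (0 <= 1 - gamma)%R by rewrite subr_ge0.
have tb0 x : (0 <= tb j x)%R by case: (tb01 j x) => ->.
have m1tb : measurable_fun setT (fun x => 1 - tb j x)%R.
  exact: measurable_funB (measurable_cst _) (mtb j).
under eq_integral do rewrite EFinD.
rewrite ge0_integralD //.
- apply: le_trans (leeD (key j) (_ : _ <= (1 - gamma)%:E)) _.
    apply: (@le_trans _ _ (\int[P]_x ((1 - gamma)%:E * (E j x)%:E))).
      apply: ge0_le_integral => //.
      + by move=> x _; rewrite lee_fin !mulr_ge0.
      + apply/measurable_EFinP; apply: measurable_funM (mE j).
        exact: measurable_funM (mtb j) (measurable_cst _).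
      + apply: emeasurable_funM => //; apply/measurable_EFinP; exact: mE.
      + move=> x _; rewrite -EFinM lee_fin ler_wpM2r //.
        by case: (tb01 j x) => ->; rewrite ?mul0r ?mul1r.
    rewrite ge0_integralZl_EFin //.
    + have h1 : (0 <= (1 - gamma)%:E) by rewrite lee_fin.
      by apply: le_trans (lee_wpmul2l h1 hE) _; rewrite mule1.
    + by move=> x _; rewrite lee_fin.
    + by apply/measurable_EFinP; exact: mE.
  by rewrite -EFinD addrC subrK.
- by move=> x _; rewrite lee_fin mulr_ge0 // tb_ge0.
- by apply/measurable_EFinP; apply: measurable_funM m1tb (mF j).
- by move=> x _; rewrite lee_fin !mulr_ge0.
- apply/measurable_EFinP; apply: measurable_funM (mE j).
  exact: measurable_funM (mtb j) (measurable_cst _).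
Qed.

End Main.


Lemma ge0_le_integral_nm d (T : measurableType d) (R : realType) (mu : measure T R)
  (f g : T -> \bar R) : (forall x, 0 <= f x)%E -> (forall x, f x <= g x)%E ->
  (\int[mu]_x f x <= \int[mu]_x g x)%E.
Proof.
move=> f0 fg.
have g0 x : (0 <= g x)%E by exact: le_trans (f0 x) (fg x).
rewrite !ge0_integralTE //; apply: le_ereal_sup => _ [h hf <-].
by exists h => // x; exact: le_trans (hf x) (fg x).
Qed.

Theorem theorem2 (d : measure_display) (T : measurableType d) (R : realType)
  (P : probability T R) (K : nat) (alpha gamma : R)
  (F E : 'I_K -> T -> R) (Tb : 'I_K -> T -> bool) (N : {set 'I_K}) :
  (0 < K)%N ->
  0 < alpha -> alpha <= 1 ->
  0 < gamma -> gamma <= 1 ->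
  (forall i, measurable_fun setT (F i)) ->
  (forall i, measurable_fun setT (E i)) ->
  (forall i x, 0 <= F i x) ->
  (forall i x, 0 <= E i x) ->
  (forall i, i \in N -> (\int[P]_x (E i x)%:E <= 1)%E) ->
  (forall i, measurable [set x | Tb i x]) ->
  (* conditionally on sigma(F_j, E_j : j), T_i ~ Bern((1 - gamma F_i^{-1})_+) *)
  (forall i A, gen_FE F E A ->
     P (A `&` [set x | Tb i x]) = (\int[P]_(x in A) (bern_prob gamma (F i x))%:E)%E) ->
  let Et := fun x i => (1 - (Tb i x)%:R) * F i x + (Tb i x)%:R * (1 - gamma) * E i x in
  (\int[P]_x (fdp N (ebh alpha (Et x)))%:E <= alpha%:E)%E.
Proof.
move=> K0 a0 a1 g0 g1 mF mE F0 E0 Enull mTb hcond.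
pose Et := fun x i => (1 - (Tb i x)%:R) * F i x + (Tb i x)%:R * (1 - gamma) * E i x.
change (\int[P]_x (fdp N (ebh alpha (Et x)))%:E <= alpha%:E)%E.
have g1' : 0 <= 1 - gamma by rewrite subr_ge0.
have Et0 x j : 0 <= Et x j.
  rewrite /Et; case: (Tb j x); rewrite /= ?subrr ?mul0r ?add0r ?subr0 ?mul1r ?mulr0 ?addr0.
  - exact: mulr_ge0.
  - exact: F0.
have aK : 0 <= alpha / K%:R by apply: divr_ge0; [exact: ltW|exact: ler0n].
apply: (@le_trans _ _ (\int[P]_x ((alpha / K%:R) * \sum_(j in N) Et x j)%:E)%E).
  apply: ge0_le_integral_nm => x.
  - by rewrite lee_fin /fdp divr_ge0 ?ler0n.
  - by rewrite lee_fin; exact: fdp_bound.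
have mEt j : measurable_fun setT (fun x => Et x j).
  rewrite /Et; apply: measurable_funD.
    apply: measurable_funM (mF j); apply: measurable_funB (measurable_cst _) _.
    exact: (mtb d T R K Tb mTb j).
  apply: measurable_funM (mE j); apply: measurable_funM (measurable_cst _).
  exact: (mtb d T R K Tb mTb j).
under eq_integral do rewrite EFinM -big_enum -sumEFin.
rewrite ge0_integralZl_EFin //; last 2 first.
- by move=> x _; apply: sume_ge0 => j _; rewrite lee_fin.
- by apply: emeasurable_sum => j; apply/measurable_EFinP; exact: mEt.
rewrite ge0_integral_sum //; last 2 first.
- by move=> j; apply/measurable_EFinP; exact: mEt.
- by move=> j x _; rewrite lee_fin.
apply: (@le_trans _ _ ((alpha / K%:R)%:E * (#|N|%:R)%:E)%E).
  apply: lee_wpmul2l; first by rewrite lee_fin.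
  rewrite big_seq (_ : #|N|%:R = \sum_(j <- enum N) 1)%R; last first.
    by rewrite big_enum sumr_const.
  rewrite -sumEFin big_seq; apply: lee_sum => j; rewrite mem_enum => jN.
  exact: (Et_le1 d T R P K gamma F E Tb g0 g1 mF mE F0 E0 mTb hcond j (Enull j jN)).
rewrite -EFinM lee_fin mulrAC ler_pdivrMr ?ltr0n // ler_wpM2l ?(ltW a0) //.
by rewrite ler_nat -[X in (_ <= X)%N]card_ord max_card.
Qed.
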